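(* Let $n\ge 2$, $q=e^{2\pi i/6}$, and let $\varphi:\mathcal{H}_n(q)\to Q_n$ be the algebra homomorphism with $\varphi(g_i)=s_i$. Then the functional $a\mapsto \mathrm{Tr}(\varphi(a))$ on $\mathcal{H}_n(q)$ equals the Markov trace $\mathrm{tr}$ with parameter $\eta=1/2$; in particular $\mathrm{Tr}(f_{n-1})=1/2$ where $f_{n-1}=\varphi(e_{n-1})=(q-s_{n-1})/(1+q)$, and $\mathrm{Tr}(f_{n-1}b)=\mathrm{Tr}(f_{n-1})\mathrm{Tr}(b)$ for all $b$ in the subalgebra generated by $u_1,v_1,\dots,u_{n-2},v_{n-2}$.
   Context: $Q_n$ is the $\mathbb{C}$-algebra with generators $u_1,v_1,\dots,u_{n-1},v_{n-1}$ and relations (G1) $u_i^2=v_i^2=-1$; (G2) $[u_i,v_j]=-1$ if $|i-j|\le1$; (G3) $[u_i,v_j]=1$ if $|i-j|\ge2$; (G4) $[u_i,u_j]=[v_i,v_j]=1$, with $[a,b]=aba^{-1}b^{-1}$. Every word in the generators equals $\pm$ a unique basis word $u_1^{\epsilon_1}\cdots u_{n-1}^{\epsilon_{n-1}}v_1^{\nu_1}\cdots v_{n-1}^{\nu_{n-1}}$ ($\epsilon_i,\nu_i\in\{0,1\}$); $\mathrm{Tr}$ is the linear functional with $\mathrm{Tr}(1)=1$ and $\mathrm{Tr}(w)=0$ for non-identity basis words $w$. $s_i=\frac{-1}{2q}(1+u_i+v_i+u_iv_i)$; these satisfy the braid relations and $(s_i-q)(s_i+1)=0$, so $\varphi$ is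 well defined. The Hecke algebra $\mathcal{H}_n(q)$ has generators $g_1,\dots,g_{n-1}$ with relations $g_ig_{i+1}g_i=g_{i+1}g_ig_{i+1}$, $g_ig_j=g_jg_i$ ($|i-j|>1$), $(g_i+1)(g_i-q)=0$; $e_i=(q-g_i)/(1+q)$. The Markov trace with parameter $\eta$ is the unique linear functional $\mathrm{tr}$ on $\bigcup_n\mathcal{H}_n(q)$ with $\mathrm{tr}(1)=1$, $\mathrm{tr}(ab)=\mathrm{tr}(ba)$, $\mathrm{tr}(xe_n)=\eta\,\mathrm{tr}(x)$ for $x\in\mathcal{H}_n(q)$. *)

(* Defs.v *)
From HB Require Import structures.
From mathcomp Require Import all_boot all_order all_algebra all_field.
Set Implicit Arguments. Unset Strict Implicit. Unset Printing Implicit Defensive.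
Import Order.TTheory GRing.Theory Num.Theory.
Local Open Scope ring_scope.

(* The algebra Q_n, n >= 2, with m := n - 1 pairs of generators
   u_1, v_1, ..., u_m, v_m (generator u_{i+1} is indexed by i : 'I_m).
   Q_n is realised on its basis of words
     u_1^{e_1} ... u_m^{e_m} v_1^{f_1} ... v_m^{f_m},
   a basis word being a pair (e, f) of 0/1-vectors.                      *)

Definition bvec (m : nat) := {ffun 'I_m -> bool}.
Definition basis (m : nat) := (bvec m * bvec m)%type.
Definition Q (m : nat) := {ffun basis m -> algC}.

Definition bxor m (a b : bvec m) : bvec m := [ffun i => a i (+) b i].
Definition band_card m (a b : bvec m) : nat := #|[pred i | a i && b i]|.

(* number of anticommuting pairs (v_j, u_i), |i - j| <= 1, met when moving
   v^nu past u^eps' *)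
Definition cross_card m (nu eps' : bvec m) : nat :=
  #|[pred ji : 'I_m * 'I_m | [&& nu ji.1, eps' ji.2 &
        (ji.1 <= ji.2.+1)%N && (ji.2 <= ji.1.+1)%N]]|.

(* (u^e v^f)(u^e' v^f') = (-1)^sign * u^(e xor e') v^(f xor f'),
   using (G1)-(G4): u_i^2 = v_i^2 = -1, u_i v_j = - v_j u_i iff |i-j|<=1,
   all other pairs commute. *)
Definition bsign m (a b : basis m) : algC :=
  (-1) ^+ (cross_card a.2 b.1 + band_card a.1 b.1 + band_card a.2 b.2).

Definition bmul m (a b : basis m) : basis m := (bxor a.1 b.1, bxor a.2 b.2).

Definition bQ m (w : basis m) : Q m := [ffun c => (c == w)%:R].

Definition Qadd m (x y : Q m) : Q m := [ffun c => x c + y c].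
Definition Qscale m (k : algC) (x : Q m) : Q m := [ffun c => k * x c].
Definition Qmul m (x y : Q m) : Q m :=
  [ffun c => \sum_(a : basis m) \sum_(b : basis m)
               (if bmul a b == c then bsign a b * x a * y b else 0)].

Definition bzero m : bvec m := [ffun _ => false].
Definition bdelta m (i : 'I_m) : bvec m := [ffun j => j == i].

Definition Q1 m : Q m := bQ (bzero m, bzero m).
Definition Qu m (i : 'I_m) : Q m := bQ (bdelta i, bzero m).
Definition Qv m (i : 'I_m) : Q m := bQ (bzero m, bdelta i).

Definition Tr m (x : Q m) : algC := x (bzero m, bzero m).

(* q = e^{2 pi i / 6} = (1 + i sqrt 3) / 2 *)
Definition q6 : algC := (1 + 'i * sqrtC 3) / 2.

Definition Qs m (i : 'I_m) : Q m :=
  Qscale (- (2 * q6)^-1)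
    (Qadd (Qadd (Q1 m) (Qu i)) (Qadd (Qv i) (Qmul (Qu i) (Qv i)))).

Definition Qf m (i : 'I_m) : Q m :=
  Qscale (1 + q6)^-1 (Qadd (Qscale q6 (Q1 m)) (Qscale (-1) (Qs i))).

(* Hecke algebra H_n(q): spanned by words in g_1, ..., g_{n-1}; a word is a
   list of indices (index i : 'I_m stands for g_{i+1}).  phi is the algebra
   homomorphism g_i |-> s_i, so phi(g_{w_1} ... g_{w_k}) = s_{w_1}...s_{w_k}. *)
Definition phi_word m (w : seq 'I_m) : Q m := foldr (fun i x => Qmul (Qs i) x) (Q1 m) w.

(* the functional a |-> Tr(phi(a)), on words (it is determined on H_n by
   linearity) *)
Definition TrPhi m (w : seq 'I_m) : algC := Tr (phi_word w).

(* A linear functional on H_n(q) is the same as a function t on words in the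
   generators that is compatible with the defining relations of H_n(q) in
   every context.  t is the restriction to H_n(q) of a Markov trace with
   parameter eta iff moreover tr(1)=1, tr(ab)=tr(ba) and
   tr(x e_{k}) = eta tr(x) for x in H_k, e_k = (q - g_k)/(1+q), k < n. *)
Definition is_markov_trace m (q eta : algC) (t : seq 'I_m -> algC) : Prop :=
      (forall (a b : seq 'I_m) (i j : 'I_m), val j = (val i).+1 :> nat ->
         t (a ++ [:: i; j; i] ++ b) = t (a ++ [:: j; i; j] ++ b)) /\
      (forall (a b : seq 'I_m) (i j : 'I_m), ((val i).+1 < val j)%N ->
         t (a ++ [:: i; j] ++ b) = t (a ++ [:: j; i] ++ b)) /\
      (* quadratic relation (g_i + 1)(g_i - q) = 0, i.e. g_i^2 = (q-1) g_i + q *)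
      (forall (a b : seq 'I_m) (i : 'I_m),
         t (a ++ [:: i; i] ++ b) = (q - 1) * t (a ++ [:: i] ++ b) + q * t (a ++ b)) /\
      t [::] = 1 /\
      (forall a b : seq 'I_m, t (a ++ b) = t (b ++ a)) /\
      (* Markov property: x a word in g_1..g_k, e_{k+1} = (q - g_{k+1})/(1+q);
         here k : 'I_m stands for g_{k+1} *)
      (forall (k : 'I_m) (x : seq 'I_m), all (fun i : 'I_m => (val i < val k)%N) x ->
         (q * t x - t (rcons x k)) / (1 + q) = eta * t x).

Inductive genQ m (P : 'I_m -> bool) : Q m -> Prop :=
  | genQ_u i : P i -> genQ P (Qu i)
  | genQ_v i : P i -> genQ P (Qv i)
  | genQ_1 : genQ P (Q1 m)
  | genQ_add x y : genQ P x -> genQ P y -> genQ P (Qadd x y)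
  | genQ_scale k x : genQ P x -> genQ P (Qscale k x)
  | genQ_mul x y : genQ P x -> genQ P y -> genQ P (Qmul x y).

(* Main.v *)
Require Import Defs.
From HB Require Import structures.
From mathcomp Require Import all_boot all_order all_algebra all_field.
Import Order.TTheory GRing.Theory Num.Theory.
Local Open Scope ring_scope.

Set Implicit Arguments. Unset Strict Implicit. Unset Printing Implicit Defensive.

Lemma sgn_card (T : finType) (P : pred T) :
  (-1 : algC) ^+ #|P| = \prod_(x : T) (-1) ^+ (P x).
Proof.
rewrite -sum1_card expr_sum [RHS](bigID P) /=.
rewrite [X in _ = _ * X]big1 ?mulr1; last by move=> x /negbTE ->.
by apply: eq_bigr => x Px; rewrite -topredE /= in Px; rewrite Px.
Qed.

Lemma sgn_xor (T : finType) (f g h : T -> bool) :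
  (-1 : algC) ^+ #|[pred x | (f x (+) g x) && h x]| =
  (-1) ^+ #|[pred x | f x && h x]| * (-1) ^+ #|[pred x | g x && h x]|.
Proof.
rewrite !sgn_card -big_split /=; apply: eq_bigr => x _.
case: (f x); case: (g x); case: (h x); rewrite /= ?expr0 ?expr1 ?mulr1 ?mul1r ?mulrNN ?mulr1 //.
Qed.

Lemma band_xorl m (a a' b : bvec m) :
  (-1 : algC) ^+ band_card (bxor a a') b = (-1) ^+ band_card a b * (-1) ^+ band_card a' b.
Proof.
rewrite /band_card -sgn_xor; congr (_ ^+ _); apply: eq_card => x.
by rewrite !inE ffunE.
Qed.

Lemma band_xorr m (a b b' : bvec m) :
  (-1 : algC) ^+ band_card a (bxor b b') = (-1) ^+ band_card a b * (-1) ^+ band_card a b'.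
Proof.
rewrite /band_card.
have E : forall c : bvec m, #|[pred i | a i && c i]| = #|[pred i | c i && a i]|.
  by move=> c; apply: eq_card => x; rewrite !inE andbC.
rewrite !E -sgn_xor; congr (_ ^+ _); apply: eq_card => x.
by rewrite !inE ffunE.
Qed.

Lemma cross_xorl m (a a' b : bvec m) :
  (-1 : algC) ^+ cross_card (bxor a a') b = (-1) ^+ cross_card a b * (-1) ^+ cross_card a' b.
Proof.
rewrite /cross_card -sgn_xor; congr (_ ^+ _); apply: eq_card => x.
by rewrite !inE ffunE.
Qed.

Lemma cross_xorr m (a b b' : bvec m) :
  (-1 : algC) ^+ cross_card a (bxor b b') = (-1) ^+ cross_card a b * (-1) ^+ cross_card a b'.
Proof.
rewrite /cross_card.
have E : forall c : bvec m, #|[pred ji : 'I_m * 'I_m | [&& a ji.1, c ji.2 &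
        (ji.1 <= ji.2.+1)%N && (ji.2 <= ji.1.+1)%N]]| =
   #|[pred ji : 'I_m * 'I_m | c ji.2 && (a ji.1 && ((ji.1 <= ji.2.+1)%N && (ji.2 <= ji.1.+1)%N))]|.
  by move=> c; apply: eq_card => x; rewrite !inE; case: (a _); case: (c _).
rewrite !E -sgn_xor; congr (_ ^+ _); apply: eq_card => x.
by rewrite !inE ffunE.
Qed.

Lemma mul6 (R : comRingType) (a b c d e f : R) :
  a * b * (c * d) * (e * f) = a * c * e * (b * d * f).
Proof. rewrite -!mulrA; congr (_ * _); rewrite mulrCA; congr (_ * _); rewrite [RHS]mulrCA; congr (_ * _); exact: mulrCA. Qed.

Lemma bsign_mull m (a a' b : basis m) :
  bsign (bmul a a') b = bsign a b * bsign a' b.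
Proof.
by rewrite /bsign /bmul /= !exprD cross_xorl !band_xorl mul6.
Qed.

Lemma bsign_mulr m (a b b' : basis m) :
  bsign a (bmul b b') = bsign a b * bsign a b'.
Proof.
by rewrite /bsign /bmul /= !exprD cross_xorr !band_xorr mul6.
Qed.

Definition b0 m : basis m := (bzero m, bzero m).

Lemma bxorK m (a c : bvec m) : bxor a (bxor a c) = c.
Proof. by apply/ffunP => i; rewrite !ffunE addbA addbb. Qed.
Lemma bxorC m (a c : bvec m) : bxor a c = bxor c a.
Proof. by apply/ffunP => i; rewrite !ffunE addbC. Qed.
Lemma bxorA m (a b c : bvec m) : bxor a (bxor b c) = bxor (bxor a b) c.
Proof. by apply/ffunP => i; rewrite !ffunE addbA. Qed.
Lemma bxor0 m (a : bvec m) : bxor a (bzero m) = a.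
Proof. by apply/ffunP => i; rewrite !ffunE addbF. Qed.
Lemma bxorv m (a : bvec m) : bxor a a = bzero m.
Proof. by apply/ffunP => i; rewrite !ffunE addbb. Qed.

Lemma bmulK m (a c : basis m) : bmul a (bmul a c) = c.
Proof. by case: a c => [a1 a2] [c1 c2]; rewrite /bmul /= !bxorK. Qed.
Lemma bmulC m (a c : basis m) : bmul a c = bmul c a.
Proof. by rewrite /bmul bxorC [bxor a.2 _]bxorC. Qed.
Lemma bmulA m (a b c : basis m) : bmul a (bmul b c) = bmul (bmul a b) c.
Proof. by rewrite /bmul /= !bxorA. Qed.
Lemma bmul0 m (a : basis m) : bmul a (b0 m) = a.
Proof. by case: a => a1 a2; rewrite /bmul /= !bxor0. Qed.
Lemma bmulv m (a : basis m) : bmul a a = b0 m.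
Proof. by rewrite /bmul !bxorv. Qed.
Lemma bmul_inj m (a : basis m) : injective (bmul a).
Proof. by move=> x y E; rewrite -(bmulK a x) E bmulK. Qed.
Lemma bmul_eq m (a b c : basis m) : (bmul a b == c) = (b == bmul a c).
Proof.
apply/eqP/eqP => [<-|->]; by rewrite ?bmulK.
Qed.

Lemma band0 m (b : bvec m) : band_card (bzero m) b = 0%N.
Proof. by apply: eq_card0 => x; rewrite !inE ffunE. Qed.
Lemma band0r m (b : bvec m) : band_card b (bzero m) = 0%N.
Proof. by apply: eq_card0 => x; rewrite !inE ffunE andbF. Qed.
Lemma cross0 m (b : bvec m) : cross_card (bzero m) b = 0%N.
Proof. by apply: eq_card0 => x; rewrite !inE ffunE. Qed.
Lemma cross0r m (b : bvec m) : cross_card b (bzero m) = 0%N.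
Proof. by apply: eq_card0 => x; rewrite !inE ffunE andbF. Qed.

Lemma bsign0l m (a : basis m) : bsign (b0 m) a = 1.
Proof. by rewrite /bsign /= cross0 !band0. Qed.
Lemma bsign0r m (a : basis m) : bsign a (b0 m) = 1.
Proof. by rewrite /bsign /= cross0r !band0r. Qed.

Lemma QmulE m (x y : Q m) c :
  Qmul x y c = \sum_a bsign a (bmul a c) * x a * y (bmul a c).
Proof.
rewrite ffunE; apply: eq_bigr => a _.
rewrite (bigD1 (bmul a c)) //= bmulK eqxx big1 ?addr0 // => b nb.
by rewrite bmul_eq (negbTE nb).
Qed.

Lemma mul6b (R : comRingType) (A B C X Y Z : R) :
  A * B * (C * X * Y) * Z = C * A * X * (B * Y * Z).
Proof.
rewrite !mulrA; congr (_ * _ * _).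
by rewrite (mulrAC A B) (mulrAC _ B) (mulrC A C).
Qed.

Lemma QmulA m (x y z : Q m) : Qmul (Qmul x y) z = Qmul x (Qmul y z).
Proof.
apply/ffunP => c; rewrite !QmulE.
under eq_bigr do rewrite QmulE mulr_sumr mulr_suml.
rewrite exchange_big /=; apply: eq_bigr => a _.
rewrite QmulE mulr_sumr (reindex_inj (@bmul_inj m a)) /=.
apply: eq_bigr => b _.
rewrite bmulK.
set e := bmul b (bmul a c).
have He : bmul (bmul a b) c = e by rewrite /e bmulA (bmulC b a).
have Hc : bmul a c = bmul b e by rewrite /e bmulK.
rewrite He Hc bsign_mull bsign_mulr.
exact: mul6b.
Qed.

Lemma Qmul1 m (x : Q m) : Qmul (Q1 m) x = x.
Proof.
apply/ffunP => c; rewrite QmulE (bigD1 (b0 m)) //= big1 => [|a na].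
  by rewrite addr0 bsign0l /Q1 /bQ !ffunE eqxx mul1r mul1r /b0 /bmul /= bxorC bxor0 bxorC bxor0; case: c.
by rewrite /Q1 /bQ ffunE (negbTE na) mulr0 mul0r.
Qed.

Lemma Qmul1r m (x : Q m) : Qmul x (Q1 m) = x.
Proof.
apply/ffunP => c; rewrite QmulE (bigD1 c) //= big1 => [|a na].
  by rewrite addr0 bmulv bsign0r /Q1 /bQ !ffunE eqxx mul1r mulr1.
rewrite /Q1 /bQ ffunE; case: eqP => [E|]; last by rewrite mulr0.
by move: na; rewrite -(bmulK a c) E bmul0 eqxx.
Qed.

Lemma QmulDl m (x y z : Q m) : Qmul (Qadd x y) z = Qadd (Qmul x z) (Qmul y z).
Proof.
apply/ffunP => c; rewrite [in RHS]ffunE !QmulE -big_split /=; apply: eq_bigr => a _.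
by rewrite ffunE mulrDr mulrDl.
Qed.

Lemma QmulDr m (x y z : Q m) : Qmul x (Qadd y z) = Qadd (Qmul x y) (Qmul x z).
Proof.
apply/ffunP => c; rewrite [in RHS]ffunE !QmulE -big_split /=; apply: eq_bigr => a _.
by rewrite ffunE mulrDr.
Qed.

Lemma QmulZl m k (x y : Q m) : Qmul (Qscale k x) y = Qscale k (Qmul x y).
Proof.
apply/ffunP => c; rewrite [in RHS]ffunE !QmulE mulr_sumr; apply: eq_bigr => a _.
by rewrite ffunE !mulrA (mulrC _ k).
Qed.

Lemma QmulZr m k (x y : Q m) : Qmul x (Qscale k y) = Qscale k (Qmul x y).
Proof.
apply/ffunP => c; rewrite [in RHS]ffunE !QmulE mulr_sumr; apply: eq_bigr => a _.
by rewrite ffunE mulrCA !mulrA.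
Qed.

Lemma Qmul_bQ m (a b : basis m) :
  Qmul (bQ a) (bQ b) = Qscale (bsign a b) (bQ (bmul a b)).
Proof.
apply/ffunP => c; rewrite QmulE !ffunE (bigD1 a) //= big1 => [|d nd].
  rewrite addr0 !ffunE eqxx mulr1 [bmul a c == b]eq_sym -bmul_eq [c == _]eq_sym.
  by case: eqP => [<-|]; rewrite ?mulr1 ?mulr0 ?bmulK.
by rewrite !ffunE (negbTE nd) mulr0 mul0r.
Qed.

Lemma TrMul m (x y : Q m) : Tr (Qmul x y) = \sum_a bsign a a * x a * y a.
Proof.
rewrite /Tr QmulE; apply: eq_bigr => a _.
by rewrite -/(b0 m) bmul0.
Qed.

Lemma TrC m (x y : Q m) : Tr (Qmul x y) = Tr (Qmul y x).
Proof. rewrite !TrMul; apply: eq_bigr => a _; by rewrite -!mulrA (mulrC (x a)). Qed.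

Lemma TrD m (x y : Q m) : Tr (Qadd x y) = Tr x + Tr y.
Proof. by rewrite /Tr ffunE. Qed.
Lemma TrZ m k (x : Q m) : Tr (Qscale k x) = k * Tr x.
Proof. by rewrite /Tr ffunE. Qed.
Lemma Tr1 m : Tr (Q1 m) = 1.
Proof. by rewrite /Tr /Q1 /bQ ffunE eqxx. Qed.

Definition evb m (i i' : 'I_m) (p0 p1 : bool) : bvec m :=
  [ffun j => if j == i then p0 else if j == i' then p1 else false].
Definition word := (bool * bool * bool * bool)%type.
Definition ev m (i i' : 'I_m) (w : word) : basis m :=
  (evb i i' w.1.1.1 w.1.1.2, evb i i' w.1.2 w.2).
Definition wxor (w w' : word) : word :=
  (w.1.1.1 (+) w'.1.1.1, w.1.1.2 (+) w'.1.1.2, w.1.2 (+) w'.1.2, w.2 (+) w'.2).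

Definition bandS (d : bool) (a0 a1 a0' a1' : bool) : nat :=
  ((a0 && a0') + (d && a1 && a1'))%N.
Definition sgnS (d c : bool) (w w' : word) : nat :=
  (((w.1.2 && w'.1.1.1) + (d && c && w.1.2 && w'.1.1.2) + (d && c && w.2 && w'.1.1.1)
   + (d && w.2 && w'.1.1.2))
  + bandS d w.1.1.1 w.1.1.2 w'.1.1.1 w'.1.1.2 + bandS d w.1.2 w.2 w'.1.2 w'.2)%N.

Lemma evb_xor m (i i' : 'I_m) p0 p1 p0' p1' :
  bxor (evb i i' p0 p1) (evb i i' p0' p1') = evb i i' (p0 (+) p0') (p1 (+) p1').
Proof.
apply/ffunP => j; rewrite !ffunE.
by case: (j == i); case: (j == i').
Qed.

Lemma bmul_ev m (i i' : 'I_m) w w' : bmul (ev i i' w) (ev i i' w') = ev i i' (wxor w w').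
Proof. by rewrite /bmul /ev /= !evb_xor. Qed.

Lemma card_sumE (T : finType) (P : pred T) : #|P| = (\sum_x (P x : nat))%N.
Proof.
rewrite -sum1_card big_mkcond /=; apply: eq_bigr => x _.
by rewrite -topredE /=; case: (P x).
Qed.

Lemma sum_ind (T : finType) (y : T) (p : bool) : (\sum_x ((x == y) && p : nat))%N = p.
Proof.
rewrite (bigD1 y) //= eqxx big1 ?addn0 // => x /negbTE ->; done.
Qed.

Lemma band_ev m (i i' : 'I_m) a0 a1 a0' a1' :
  band_card (evb i i' a0 a1) (evb i i' a0' a1') = bandS (i != i') a0 a1 a0' a1'.
Proof.
rewrite /band_card card_sumE.
have E : forall j, (([pred j | evb i i' a0 a1 j && evb i i' a0' a1' j] j) : nat) =
   (((j == i) && (a0 && a0')) + ((j == i') && ((i != i') && a1 && a1')))%N.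
  move=> j; rewrite /= !ffunE.
  case: (eqVneq j i) => [->|nji]; first by rewrite eq_sym; case: eqP => //= _; rewrite addn0.
  case: (eqVneq j i') => [Ej|nji'] //=. subst j; by rewrite eq_sym nji /=; case: a1; case: a1'.
by rewrite (eq_bigr _ (fun j _ => E j)) big_split /= !sum_ind.
Qed.

Definition adjb m (i i' : 'I_m) : bool := ((i <= i'.+1)%N && (i' <= i.+1)%N).

Lemma cross_ev m (i i' : 'I_m) b0 b1 a0 a1 :
  cross_card (evb i i' b0 b1) (evb i i' a0 a1) =
  ((b0 && a0) + ((i != i') && adjb i i' && b0 && a1) + ((i != i') && adjb i i' && b1 && a0)
   + ((i != i') && b1 && a1))%N.
Proof.
rewrite /cross_card card_sumE.
have E : forall x : 'I_m * 'I_m, (([pred ji : 'I_m * 'I_m | [&& evb i i' b0 b1 ji.1, evb i i' a0 a1 ji.2 &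
        (ji.1 <= ji.2.+1)%N && (ji.2 <= ji.1.+1)%N]] x) : nat) =
   ((x == (i,i)) && (b0 && a0) + (x == (i,i')) && ((i != i') && adjb i i' && b0 && a1)
   + (x == (i',i)) && ((i != i') && adjb i i' && b1 && a0) + (x == (i',i')) && ((i != i') && b1 && a1))%N.
  case=> j k; rewrite /= !xpair_eqE !ffunE /adjb.
  case: (eqVneq i i') => [Eii|nii].
    subst i'; rewrite /=.
    case: (eqVneq j i) => [Ej|nj]; try subst j; rewrite /=;
    case: (eqVneq k i) => [Ek|nk]; try subst k; rewrite /= ?leqnSn ?addn0 ?andbF ?andbT //=.
  have h1 : (i == i') = false by apply/negbTE.
  have h2 : (i' == i) = false by rewrite eq_sym h1.
  case: (eqVneq j i) => [Ej|nj]; try subst j; rewrite /= ?h1 ?h2 ?eqxx /=;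
  case: (eqVneq k i) => [Ek|nk]; try subst k; rewrite /= ?h1 ?h2 ?eqxx /=;
  try (case: (eqVneq j i') => [Ej'|nj']; try subst j; rewrite /= ?h1 ?h2 ?eqxx /=);
  try (case: (eqVneq k i') => [Ek'|nk']; try subst k; rewrite /= ?h1 ?h2 ?eqxx /=);
  rewrite ?leqnSn ?addn0 ?andbF ?andbT ?add0n //=;
  by case: b0; case: b1; case: a0; case: a1; case: (i <= i'.+1)%N; case: (i' <= i.+1)%N.
rewrite (eq_bigr _ (fun j _ => E j)) !big_split /= !sum_ind.
by rewrite !andbA.
Qed.

Lemma bsign_ev m (i i' : 'I_m) w w' :
  bsign (ev i i' w) (ev i i' w') = (-1) ^+ sgnS (i != i') (adjb i i') w w'.
Proof. by rewrite /bsign /ev /= cross_ev !band_ev. Qed.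

Definition elt := seq (int * word).
Definition sgnZ (n : nat) (k : int) : int := if odd n then - k else k.
Definition mulS d c (s t : elt) : elt :=
  [seq (sgnZ (sgnS d c p.2 q.2) (p.1 * q.1), wxor p.2 q.2) | p <- s, q <- t].
Definition Q0 m : Q m := [ffun _ => 0].
Definition evS m (i i' : 'I_m) (s : elt) : Q m :=
  foldr (fun p acc => Qadd (Qscale (p.1)%:~R (bQ (ev i i' p.2))) acc) (Q0 m) s.
Definition coef (s : elt) (w : word) : int :=
  foldr (fun p acc => (if p.2 == w then p.1 else 0) + acc) 0 s.

Lemma Qadd0 m (x : Q m) : Qadd (Q0 m) x = x.
Proof. by apply/ffunP => c; rewrite !ffunE add0r. Qed.
Lemma QaddA m (x y z : Q m) : Qadd x (Qadd y z) = Qadd (Qadd x y) z.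
Proof. by apply/ffunP => c; rewrite !ffunE addrA. Qed.
Lemma Qmul0l m (x : Q m) : Qmul (Q0 m) x = Q0 m.
Proof. by apply/ffunP => c; rewrite QmulE ffunE big1 // => a _; rewrite ffunE mulr0 mul0r. Qed.
Lemma Qmul0r m (x : Q m) : Qmul x (Q0 m) = Q0 m.
Proof. by apply/ffunP => c; rewrite QmulE ffunE big1 // => a _; rewrite ffunE mulr0. Qed.

Lemma evS_cat m (i i' : 'I_m) s t : evS i i' (s ++ t) = Qadd (evS i i' s) (evS i i' t).
Proof. by elim: s => [|p s IH] /=; rewrite ?Qadd0 // IH QaddA. Qed.

Lemma sgnZE n (k : int) : (sgnZ n k)%:~R = (-1) ^+ n * (k%:~R : algC).
Proof.
rewrite /sgnZ -signr_odd; case: (odd n); by rewrite ?expr1 ?expr0 ?mulN1r ?mul1r ?rmorphN.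
Qed.

Lemma evS_mul m (i i' : 'I_m) s t :
  evS i i' (mulS (i != i') (adjb i i') s t) = Qmul (evS i i' s) (evS i i' t).
Proof.
elim: s => [|p s IH]; first by rewrite /= Qmul0l.
rewrite /mulS allpairs_cons evS_cat -/(mulS _ _ s t) IH /= QmulDl; congr (Qadd _ _).
clear IH; elim: t => [|q t IHt] /=; first by rewrite Qmul0r.
rewrite IHt QmulDr QmulZl QmulZr QmulZl Qmul_bQ bmul_ev bsign_ev; congr (Qadd _ _).
apply/ffunP => c; rewrite !ffunE sgnZE rmorphM /=.
by rewrite !mulrA; congr (_ * _); rewrite mulrC [X in _ * X = _]mulrC mulrA.
Qed.

Lemma coef_cons p s w : coef (p :: s) w = (if p.2 == w then p.1 else 0) + coef s w.
Proof. by []. Qed.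

Lemma evS_coef m (i i' : 'I_m) s c :
  evS i i' s c = \sum_(w : word) (coef s w)%:~R * (c == ev i i' w)%:R.
Proof.
elim: s => [|p s IH].
  by rewrite ffunE big1 // => w _; rewrite mul0r.
rewrite [evS _ _ _]/= !ffunE IH.
rewrite [RHS](eq_bigr (fun w => ((if p.2 == w then p.1 else 0)%:~R * (c == ev i i' w)%:R + (coef s w)%:~R * (c == ev i i' w)%:R))); last by move=> w _; rewrite coef_cons intrD mulrDl.
rewrite big_split /=; congr (_ + _).
rewrite (bigD1 p.2) //= eqxx big1 ?addr0 => [|w nw]; last by rewrite eq_sym (negbTE nw) mul0r.
by [].
Qed.

Lemma evS_eq m (i i' : 'I_m) s t : (forall w, coef s w = coef t w) -> evS i i' s = evS i i' t.
Proof.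
move=> H; apply/ffunP => c; rewrite !evS_coef; apply: eq_bigr => w _; by rewrite H.
Qed.

Definition w0 : word := (false, false, false, false).
Definition wu0 : word := (true, false, false, false).
Definition wv0 : word := (false, false, true, false).
Definition wu1 : word := (false, true, false, false).
Definition wv1 : word := (false, false, false, true).
Definition XS d c (wu wv : word) : elt :=
  [:: (1%Z, w0); (1%Z, wu); (1%Z, wv)] ++ mulS d c [:: (1%Z, wu)] [:: (1%Z, wv)].


Definition Xq m (i : 'I_m) : Q m :=
  Qadd (Qadd (Q1 m) (Qu i)) (Qadd (Qv i) (Qmul (Qu i) (Qv i))).

Lemma Qadd0r m (x : Q m) : Qadd x (Q0 m) = x.
Proof. by apply/ffunP => c; rewrite !ffunE addr0. Qed.
Lemma Qscale1 m (x : Q m) : Qscale 1 x = x.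
Proof. by apply/ffunP => c; rewrite !ffunE mul1r. Qed.

Lemma evS1 m (i i' : 'I_m) w : evS i i' [:: (1%Z, w)] = bQ (ev i i' w).
Proof. by rewrite /= Qadd0r Qscale1. Qed.

Lemma ev_w0 m (i i' : 'I_m) : ev i i' w0 = (bzero m, bzero m).
Proof. by rewrite /ev /=; congr (_, _); apply/ffunP => j; rewrite !ffunE; case: ifP => //; case: ifP. Qed.
Lemma ev_wu0 m (i i' : 'I_m) : ev i i' wu0 = (bdelta i, bzero m).
Proof.
rewrite /ev /=; congr (_, _); apply/ffunP => j; rewrite !ffunE //; case: ifP => //; case: ifP => //.
Qed.
Lemma ev_wv0 m (i i' : 'I_m) : ev i i' wv0 = (bzero m, bdelta i).
Proof.
rewrite /ev /=; congr (_, _); apply/ffunP => j; rewrite !ffunE //; case: ifP => //; case: ifP => //.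
Qed.
Lemma ev_wu1 m (i i' : 'I_m) : i != i' -> ev i i' wu1 = (bdelta i', bzero m).
Proof.
move=> nii; rewrite /ev /=; congr (_, _); apply/ffunP => j; rewrite !ffunE //.
  case: (eqVneq j i) => [Ej|nj] /=; [subst j; by rewrite (negbTE nii) | by case: (j == i')].
by case: ifP => //; case: ifP.
Qed.
Lemma ev_wv1 m (i i' : 'I_m) : i != i' -> ev i i' wv1 = (bzero m, bdelta i').
Proof.
move=> nii; rewrite /ev /=; congr (_, _); apply/ffunP => j; rewrite !ffunE //.
  by case: ifP => //; case: ifP.
case: (eqVneq j i) => [Ej|nj] /=; [subst j; by rewrite (negbTE nii) | by case: (j == i')].
Qed.

Lemma Xq_ev0 m (i i' : 'I_m) : Xq i = evS i i' (XS (i != i') (adjb i i') wu0 wv0).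
Proof.
rewrite /XS evS_cat evS_mul !evS1 /= Qadd0r !Qscale1 ev_w0 ev_wu0 ev_wv0 -!QaddA.
by rewrite /Xq -!QaddA.
Qed.

Lemma Xq_ev1 m (i i' : 'I_m) : i != i' -> Xq i' = evS i i' (XS (i != i') (adjb i i') wu1 wv1).
Proof.
move=> nii.
rewrite /XS evS_cat evS_mul !evS1 /= Qadd0r !Qscale1 ev_w0 ev_wu1 // ev_wv1 // -!QaddA.
by rewrite /Xq -!QaddA.
Qed.

Lemma Xq_braid m (i j : 'I_m) : val j = (val i).+1 ->
  Qmul (Xq i) (Qmul (Xq j) (Xq i)) = Qmul (Xq j) (Qmul (Xq i) (Xq j)).
Proof.
move=> Ej.
have Ej' : (j : nat) = i.+1 := Ej.
have nij : i != j by apply/eqP => E; subst j; move/eqP: Ej'; rewrite (ltn_eqF (ltnSn _)).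
have adj : adjb i j by rewrite /adjb Ej' leqnn andbT leqW.
rewrite (Xq_ev1 nij) (Xq_ev0 i j) -!evS_mul nij adj; apply: evS_eq.
by case=> [[[a0 a1] b0] b1]; case: a0; case: a1; case: b0; case: b1; vm_compute.
Qed.

Lemma Xq_far m (i j : 'I_m) : ((val i).+1 < val j)%N ->
  Qmul (Xq i) (Xq j) = Qmul (Xq j) (Xq i).
Proof.
move=> Ej.
have nij : i != j by apply/eqP => E; subst j; move: Ej; rewrite ltnNge leqW.
have adj : adjb i j = false by rewrite /adjb (leqNgt j) Ej andbF.
rewrite (Xq_ev1 nij) (Xq_ev0 i j) -!evS_mul nij adj; apply: evS_eq.
by case=> [[[a0 a1] b0] b1]; case: a0; case: a1; case: b0; case: b1; vm_compute.
Qed.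

Lemma Xq_quad m (i : 'I_m) :
  Qmul (Xq i) (Xq i) = Qadd (Qadd (Xq i) (Xq i)) (Qscale (-4) (Q1 m)).
Proof.
have -> : Qscale (-4) (Q1 m) = evS i i [:: ((-4)%Z, w0)].
  by rewrite /= Qadd0r ev_w0.
rewrite (Xq_ev0 i i) -!evS_mul -!evS_cat eqxx /adjb leqnSn; apply: evS_eq.
by case=> [[[a0 a1] b0] b1]; case: a0; case: a1; case: b0; case: b1; vm_compute.
Qed.

Lemma two_neq0 : (2 : algC) != 0.
Proof. by rewrite pnatr_eq0. Qed.

Lemma num_aux : (-3 + 1 : algC) = 1 *+ 2 - 4.
Proof.
rewrite -[4]/((2 + 2)%:R) -[3]/((2+1)%:R) !natrD.
by rewrite [in LHS]opprD -[LHS]addrA addNr addr0 [in RHS]opprD [RHS]addrA addrN add0r.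
Qed.

Lemma q6_sq : q6 ^+ 2 = q6 - 1.
Proof.
set x := ('i : algC) * sqrtC 3.
have hx : x ^+ 2 = -3 by rewrite exprMn sqrCi sqrtCK mulN1r.
have h2 : 2 * q6 = 1 + x by rewrite /q6 mulrC divfK // two_neq0.
have h4 : (2 * q6) ^+ 2 = (2 * q6) *+ 2 - 4.
  rewrite h2 addrC sqrrD1 hx mulrnDl [LHS]addrAC [LHS]addrC -[RHS]addrA.
  by rewrite num_aux.
have e4 : (4 : algC) = 2 * 2 by rewrite -natrM.
have n4 : (4 : algC) != 0 by rewrite pnatr_eq0.
apply: (mulfI n4).
move: h4; rewrite exprMn -mulrnAr e4 -expr2 => ->.
by rewrite mulrBr mulr1 expr2 -mulrA -[q6 *+ 2]mulr_natl.
Qed.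

Definition c6 : algC := - (2 * q6)^-1.

Lemma q6_neq0 : q6 != 0.
Proof.
apply/eqP => E; have := q6_sq; rewrite E expr0n /= sub0r => /eqP.
by rewrite eq_sym oppr_eq0 oner_eq0.
Qed.

Lemma q6_inv : q6^-1 = 1 - q6.
Proof.
have h : q6 * (1 - q6) = 1 by rewrite mulrBr mulr1 -expr2 q6_sq opprB addrC subrK.
by rewrite -[RHS](mulKf q6_neq0) h mulr1.
Qed.

Lemma c6E : c6 = (q6 - 1) / 2.
Proof. by rewrite /c6 invfM q6_inv mulrC -mulNr opprB. Qed.

Lemma c6_2 : c6 * 2 = q6 - 1.
Proof. by rewrite c6E divfK // two_neq0. Qed.

Lemma onePq_neq0 : 1 + q6 != 0.
Proof.
apply/eqP => E.
have Eq : q6 = -1 by apply/eqP; rewrite -addr_eq0 addrC E.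
have := q6_sq; rewrite Eq sqrrN expr1n -opprD => h.
have : 1 + 2 = (0 : algC) by rewrite {1}h addNr.
by move/eqP; rewrite -[1 + 2]/(3%:R) pnatr_eq0.
Qed.

Lemma markov_scal : (q6 - c6) / (1 + q6) = 1 / 2.
Proof.
have h : q6 - c6 = (1 + q6) / 2.
  apply: (mulIf two_neq0); rewrite divfK ?two_neq0 // mulrBl c6_2.
  by rewrite mulr_natr mulr2n opprB addrC addrA subrK.
by rewrite h mulrAC divff ?onePq_neq0.
Qed.

Lemma quad_scal1 : c6 * c6 *+ 2 = (q6 - 1) * c6.
Proof. by rewrite -mulr_natr -mulrA c6_2 mulrC. Qed.

Lemma quad_scal2 : c6 * c6 * (-4) = q6.
Proof.
have e4 : (-4 : algC) = - (2 * 2) by rewrite -natrM.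
have h : c6 * c6 * (2 * 2) = (q6 - 1) ^+ 2 by rewrite -c6_2 expr2 mulrACA.
by rewrite e4 mulrN h sqrrB1 q6_sq mulr2n addrAC subrK opprD opprK addrC addrK.
Qed.

Lemma QscaleA m a b (x : Q m) : Qscale a (Qscale b x) = Qscale (a * b) x.
Proof. by apply/ffunP => c; rewrite !ffunE mulrA. Qed.

Lemma Qs_def m (i : 'I_m) : Qs i = Qscale c6 (Xq i).
Proof. by []. Qed.

Lemma Qs_braid m (i j : 'I_m) : val j = (val i).+1 ->
  Qmul (Qs i) (Qmul (Qs j) (Qs i)) = Qmul (Qs j) (Qmul (Qs i) (Qs j)).
Proof.
move=> Ej; rewrite !Qs_def !(QmulZl, QmulZr, QscaleA).
by rewrite Xq_braid.
Qed.

Lemma Qs_far m (i j : 'I_m) : ((val i).+1 < val j)%N ->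
  Qmul (Qs i) (Qs j) = Qmul (Qs j) (Qs i).
Proof.
move=> Ej; rewrite !Qs_def !(QmulZl, QmulZr, QscaleA).
by rewrite Xq_far.
Qed.

Lemma Qs_quad m (i : 'I_m) :
  Qmul (Qs i) (Qs i) = Qadd (Qscale (q6 - 1) (Qs i)) (Qscale q6 (Q1 m)).
Proof.
rewrite !Qs_def !(QmulZl, QmulZr, QscaleA) Xq_quad.
move: (Xq i) (Q1 m) => X o.
apply/ffunP => a; rewrite !ffunE.
rewrite mulrDr -mulr2n mulrnAr -mulrnAl quad_scal1 (mulrA _ (-4)) quad_scal2.
by [].
Qed.

Lemma phi_cat m (a b : seq 'I_m) : phi_word (a ++ b) = Qmul (phi_word a) (phi_word b).
Proof.
elim: a => [|i a IH] /=; first by rewrite Qmul1.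
by rewrite IH QmulA.
Qed.

Lemma phi1 m (i : 'I_m) : phi_word [:: i] = Qs i.
Proof. by rewrite /= Qmul1r. Qed.

Definition lowb m (k : nat) (a : basis m) : bool :=
  [forall j : 'I_m, (k <= j)%N ==> ~~ a.1 j && ~~ a.2 j].
Definition supp m (k : nat) (y : Q m) := forall a, ~~ lowb k a -> y a = 0.

Lemma lowb_mul m k (a b : basis m) : lowb k a -> lowb k b -> lowb k (bmul a b).
Proof.
move=> /forallP Ha /forallP Hb; apply/forallP => j; apply/implyP => kj.
move: (implyP (Ha j) kj) (implyP (Hb j) kj) => /andP [h1 h2] /andP [h3 h4].
by rewrite /bmul /= !ffunE (negbTE h1) (negbTE h2) (negbTE h3) (negbTE h4).
Qed.

Lemma supp_mul m k (x y : Q m) : supp k x -> supp k y -> supp k (Qmul x y).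
Proof.
move=> Hx Hy c nc; rewrite QmulE big1 // => a _.
case La: (lowb k a); last by rewrite Hx ?La ?mulr0 ?mul0r.
case Lb: (lowb k (bmul a c)).
  by move: nc; rewrite -(bmulK a c) lowb_mul.
by rewrite Hy ?Lb ?mulr0.
Qed.

Lemma supp_add m k (x y : Q m) : supp k x -> supp k y -> supp k (Qadd x y).
Proof. by move=> Hx Hy c nc; rewrite ffunE Hx // Hy // addr0. Qed.
Lemma supp_scale m k a (x : Q m) : supp k x -> supp k (Qscale a x).
Proof. by move=> Hx c nc; rewrite ffunE Hx // mulr0. Qed.
Lemma supp_bQ m k (a : basis m) : lowb k a -> supp k (bQ a).
Proof.
move=> La c nc; rewrite ffunE.
have -> : (c == a) = false by apply/eqP => E; move: nc; rewrite E La.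
by [].
Qed.

Lemma lowb0 m k : lowb k (b0 m).
Proof. by apply/forallP => j; rewrite /b0 /= !ffunE implybT. Qed.

Lemma lowb_u m k (j : 'I_m) : (j < k)%N -> lowb k (bdelta j, bzero m).
Proof.
move=> jk; apply/forallP => l; apply/implyP => kl; rewrite /= !ffunE andbT.
by apply/eqP => E; move: jk; rewrite -E ltnNge kl.
Qed.
Lemma lowb_v m k (j : 'I_m) : (j < k)%N -> lowb k (bzero m, bdelta j).
Proof.
move=> jk; apply/forallP => l; apply/implyP => kl; rewrite /= !ffunE /=.
by apply/eqP => E; move: jk; rewrite -E ltnNge kl.
Qed.

Lemma supp_Q1 m k : supp k (Q1 m).
Proof. exact: supp_bQ (lowb0 m k). Qed.
Lemma supp_Qu m k (j : 'I_m) : (j < k)%N -> supp k (Qu j).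
Proof. by move=> jk; apply: supp_bQ; apply: lowb_u. Qed.
Lemma supp_Qv m k (j : 'I_m) : (j < k)%N -> supp k (Qv j).
Proof. by move=> jk; apply: supp_bQ; apply: lowb_v. Qed.

Lemma supp_Qs m k (j : 'I_m) : (j < k)%N -> supp k (Qs j).
Proof.
move=> jk; rewrite Qs_def; apply: supp_scale.
apply: supp_add; apply: supp_add.
- exact: supp_Q1.
- exact: supp_Qu.
- exact: supp_Qv.
- by apply: supp_mul; [apply: supp_Qu | apply: supp_Qv].
Qed.

Lemma supp_phi m k (x : seq 'I_m) : all (fun i : 'I_m => (i < k)%N) x -> supp k (phi_word x).
Proof.
elim: x => [|i x IH] /=; first by move=> _; exact: supp_Q1.
by move/andP=> [hi hx]; apply: supp_mul (supp_Qs hi) (IH hx).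
Qed.

Lemma neq_at1 m (a : basis m) (k : 'I_m) (x y : bvec m) : a.1 k = false -> x k = true -> (a == (x, y)) = false.
Proof. by move=> h1 h2; apply/eqP => E; move: h1; rewrite E /= h2. Qed.
Lemma neq_at2 m (a : basis m) (k : 'I_m) (x y : bvec m) : a.2 k = false -> y k = true -> (a == (x, y)) = false.
Proof. by move=> h1 h2; apply/eqP => E; move: h1; rewrite E /= h2. Qed.

Arguments neq_at1 {m a k} x y.
Arguments neq_at2 {m a k} x y.

Lemma Xq_at m (k : 'I_m) (a : basis m) : a.1 k = false -> a.2 k = false ->
  Xq k a = (a == b0 m)%:R.
Proof.
move=> h1 h2.
rewrite /Xq /Qu /Qv Qmul_bQ !ffunE.
rewrite (neq_at1 (bdelta k) (bzero m) h1) ?ffunE ?eqxx // (neq_at2 (bzero m) (bdelta k) h2) ?ffunE ?eqxx //.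
rewrite /bmul /= (neq_at1 (bxor (bdelta k) (bzero m)) (bxor (bzero m) (bdelta k)) h1) ?ffunE ?eqxx //.
by rewrite addr0 add0r mulr0 addr0.
Qed.

Lemma TrMarkov m (k : 'I_m) (y : Q m) : supp k y -> Tr (Qmul y (Qs k)) = c6 * Tr y.
Proof.
move=> Hy; rewrite TrMul (bigD1 (b0 m)) //= big1 ?addr0 => [|a na].
  rewrite bsign0l mul1r /Tr -/(b0 m) Qs_def ffunE Xq_at ?eqxx ?mulr1 1?mulrC //; by rewrite /b0 /= ffunE.
case La: (lowb k a); last by rewrite Hy ?La ?mulr0 ?mul0r.
have kk : (k <= k)%N by [].
move/forallP: La => /(_ k) /implyP /(_ kk) /andP [h1 h2].
by rewrite Qs_def ffunE Xq_at ?(negbTE h1) ?(negbTE h2) // (negbTE na) !mulr0.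
Qed.

Lemma TrXq m (i : 'I_m) : Tr (Xq i) = 1.
Proof. by rewrite /Tr -/(b0 m) Xq_at ?eqxx // /b0 /= ffunE. Qed.

Lemma TrQs m (i : 'I_m) : Tr (Qs i) = c6.
Proof. by rewrite Qs_def TrZ TrXq mulr1. Qed.

Lemma Tr_Qf m (i : 'I_m) : Tr (Qf i) = 1 / 2.
Proof.
rewrite /Qf TrZ TrD [Tr (Qscale q6 _)]TrZ [Tr (Qscale (-1) _)]TrZ Tr1 TrQs mulr1 mulN1r mulrC.
exact: markov_scal.
Qed.

Lemma Tr_Qf_mul m (i : 'I_m) (b : Q m) : supp i b -> Tr (Qmul (Qf i) b) = Tr (Qf i) * Tr b.
Proof.
move=> Hb; rewrite TrC Tr_Qf /Qf QmulZr QmulDr [Qmul b (Qscale q6 _)]QmulZr [Qmul b (Qscale (-1) _)]QmulZr Qmul1r TrZ TrD [Tr (Qscale q6 _)]TrZ [Tr (Qscale (-1) _)]TrZ TrMarkov //.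
by rewrite mulN1r -mulrBl -markov_scal mulrA (mulrC (1 + q6)^-1).
Qed.

Lemma phi_iji m (i j : 'I_m) : phi_word [:: i; j; i] = Qmul (Qs i) (Qmul (Qs j) (Qs i)).
Proof. by rewrite /= Qmul1r. Qed.
Lemma phi_ij m (i j : 'I_m) : phi_word [:: i; j] = Qmul (Qs i) (Qs j).
Proof. by rewrite /= Qmul1r. Qed.

Lemma TrPhi_markov m : is_markov_trace q6 (1 / 2) (@TrPhi m).
Proof.
rewrite /is_markov_trace /TrPhi; split; [|split; [|split; [|split; [|split]]]].
- move=> a b i j Ej; by rewrite !phi_cat !phi_iji Qs_braid.
- move=> a b i j Ej; by rewrite !phi_cat !phi_ij Qs_far.
- move=> a b i; rewrite !phi_cat phi_ij Qs_quad QmulDl QmulZl QmulZl Qmul1 phi1.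
  by rewrite QmulDr QmulZr QmulZr TrD !TrZ.
- exact: Tr1.
- by move=> a b; rewrite !phi_cat TrC.
- move=> k x hx; rewrite -cats1 phi_cat phi1 TrMarkov; last exact: supp_phi.
  by rewrite -mulrBl -markov_scal mulrAC.
Qed.

Definition rel3 m (t : seq 'I_m -> algC) : Prop :=
      (forall (a b : seq 'I_m) (i j : 'I_m), val j = (val i).+1 :> nat ->
         t (a ++ [:: i; j; i] ++ b) = t (a ++ [:: j; i; j] ++ b)) /\
      (forall (a b : seq 'I_m) (i j : 'I_m), ((val i).+1 < val j)%N ->
         t (a ++ [:: i; j] ++ b) = t (a ++ [:: j; i] ++ b)) /\
      (forall (a b : seq 'I_m) (i : 'I_m),
         t (a ++ [:: i; i] ++ b) = (q6 - 1) * t (a ++ [:: i] ++ b) + q6 * t (a ++ b)).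

Definition cnt m k (w : seq 'I_m) := count (fun l : 'I_m => val l == k) w.
Definition good m k (w : seq 'I_m) :=
  all (fun l : 'I_m => (val l <= k)%N) w && (cnt k w <= 1)%N.
Definition Rep m k (w : seq 'I_m) :=
  exists L : seq (algC * seq 'I_m),
    (forall t, rel3 t -> forall a b, t (a ++ w ++ b) = \sum_(p <- L) p.1 * t (a ++ p.2 ++ b))
    /\ all (fun p => good k p.2) L.

Lemma Rep_good m k (w : seq 'I_m) : good k w -> Rep k w.
Proof.
move=> g; exists [:: (1, w)]; split; last by rewrite /= g.
by move=> t _ a b; rewrite big_cons big_nil mul1r addr0.
Qed.

Lemma Rep_sum m k (M : seq (algC * seq 'I_m)) : (forall p, p \in M -> Rep k p.2) ->
  exists L : seq (algC * seq 'I_m),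
    (forall t, rel3 t -> forall a b, \sum_(p <- M) p.1 * t (a ++ p.2 ++ b) =
        \sum_(p <- L) p.1 * t (a ++ p.2 ++ b))
    /\ all (fun p => good k p.2) L.
Proof.
elim: M => [|p M IH] H.
  by exists [::]; split => // t _ a b; rewrite !big_nil.
have [Lp [Hp gp]] := H p (mem_head _ _).
have [L [HL gL]] : exists L : seq (algC * seq 'I_m),
    (forall t, rel3 t -> forall a b, \sum_(p <- M) p.1 * t (a ++ p.2 ++ b) =
        \sum_(p <- L) p.1 * t (a ++ p.2 ++ b))
    /\ all (fun p => good k p.2) L.
  by apply: IH => r hr; apply: H; rewrite inE hr orbT.
exists ([seq (p.1 * r.1, r.2) | r <- Lp] ++ L); split.
  move=> t ht a b; rewrite big_cons big_cat big_map /= HL // Hp // mulr_sumr; congr (_ + _).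
  by apply: eq_bigr => r _; rewrite mulrA.
by rewrite all_cat gL andbT all_map.
Qed.

Lemma Rep_lin m k (w : seq 'I_m) (M : seq (algC * seq 'I_m)) :
  (forall t, rel3 t -> forall a b, t (a ++ w ++ b) = \sum_(p <- M) p.1 * t (a ++ p.2 ++ b)) ->
  (forall p, p \in M -> Rep k p.2) -> Rep k w.
Proof.
move=> Hw HM; have [L [HL gL]] := Rep_sum HM.
by exists L; split => // t ht a b; rewrite Hw // HL.
Qed.

Lemma move_right m (t : seq 'I_m -> algC) : rel3 t -> forall (i : 'I_m) u,
  all (fun l : 'I_m => ((val l).+1 < val i)%N) u ->
  forall a b, t (a ++ [:: i] ++ u ++ b) = t (a ++ u ++ [:: i] ++ b).
Proof.
move=> [_ [Hf _]] i; elim=> [|l u IH] //= /andP [hl hu] a b.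
have := Hf a (u ++ b) l i hl; rewrite /= => <-.
by have := IH hu (rcons a l) b; rewrite -cats1 -!catA /=.
Qed.

Lemma split_first m k (w : seq 'I_m) : has (fun l : 'I_m => val l == k) w ->
  exists x i w', [/\ w = x ++ i :: w', val i = k & cnt k x = 0%N].
Proof.
elim: w => [|l w IH] //= /orP [/eqP hl|hw].
  by exists [::], l, w.
case: (boolP (val l == k)) => [/eqP hl|nl]; first by exists [::], l, w.
have [x [i [w' [E hi hx]]]] := IH hw.
by exists (l :: x), i, w'; split; rewrite /= ?E // hx (negbTE nl).
Qed.

Definition lowk' m k (u : seq 'I_m) := all (fun l : 'I_m => ((val l).+1 < k)%N) u.
Definition AB m k (u : seq 'I_m) : Prop := lowk' k u \/
  exists y1 l y2, [/\ u = y1 ++ l :: y2, (val l).+1 = k, lowk' k y1 & lowk' k y2].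
Definition HYk m k := forall y : seq 'I_m, all (fun l : 'I_m => (val l < k)%N) y ->
  exists L : seq (algC * seq 'I_m),
    (forall t, rel3 t -> forall a b, t (a ++ y ++ b) = \sum_(p <- L) p.1 * t (a ++ p.2 ++ b))
    /\ (forall p, p \in L -> AB k p.2).

Lemma cnt_cat m k (u v : seq 'I_m) : cnt k (u ++ v) = (cnt k u + cnt k v)%N.
Proof. exact: count_cat. Qed.
Lemma cnt_cons m k (i : 'I_m) u : cnt k (i :: u) = ((val i == k) + cnt k u)%N.
Proof. by []. Qed.
Lemma lowk'_cnt m k (u : seq 'I_m) : lowk' k u -> cnt k u = 0%N.
Proof.
elim: u => //= l u IH /andP [hl hu]; rewrite IH // addn0.
by case: eqP => // E; move: hl; rewrite E ltnNge leqnSn.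
Qed.
Lemma lowk'_le m k (u : seq 'I_m) : lowk' k u -> all (fun l : 'I_m => (val l <= k)%N) u.
Proof. by apply: sub_all => l /ltnW /ltnW. Qed.
Lemma all_le_lt m k (u : seq 'I_m) : all (fun l : 'I_m => (val l <= k)%N) u -> cnt k u = 0%N ->
  all (fun l : 'I_m => (val l < k)%N) u.
Proof.
elim: u => //= l u IH /andP [hl hu] /eqP; rewrite addn_eq0 => /andP [nl /eqP hc].
by rewrite IH // andbT ltn_neqAle hl andbT; move: nl; rewrite eqb0.
Qed.

Ltac norm := rewrite /=; repeat (rewrite -catA /=).

Lemma red_step m k : HYk m k -> forall w : seq 'I_m,
  all (fun l : 'I_m => (val l <= k)%N) w -> Rep k w.
Proof.
move=> HY.
suff H : forall N (w : seq 'I_m), (cnt k w <= N)%N -> all (fun l : 'I_m => (val l <= k)%N) w -> Rep k w.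
  by move=> w; apply: (H _ w (leqnn _)).
elim=> [|N IHN] w hc ha.
  by apply: Rep_good; rewrite /good ha (leq_trans hc).
case: (leqP (cnt k w) 1) => [c1|c2]; first by apply: Rep_good; rewrite /good ha c1.
have h1 : has (fun l : 'I_m => val l == k) w by rewrite has_count ltnW.
have [x [i [w' [Ew hi hx]]]] := split_first h1.
have cw : cnt k w = (cnt k w').+1 by rewrite Ew cnt_cat cnt_cons hx hi eqxx.
have h2 : has (fun l : 'I_m => val l == k) w' by rewrite has_count -ltnS -cw.
have [y [j [z [Ew' hj hy]]]] := split_first h2.
have ij : j = i by apply: val_inj; rewrite /= hj hi.
subst j w' w.
move: ha; rewrite !all_cat /= !all_cat /= hi leqnn /= => /and3P [ax ay az].
have ay' := all_le_lt ay hy.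
have [Ly [HLy ABy]] := HY y ay'.
have cz : (cnt k z < N)%N.
  by move: hc; rewrite !(cnt_cat, cnt_cons) hx hy hi eqxx.
apply: (Rep_lin (M := [seq (p.1, x ++ [:: i] ++ p.2 ++ [:: i] ++ z) | p <- Ly])).
  move=> t ht a b; rewrite big_map /=.
  have := HLy t ht (a ++ x ++ [:: i]) ([:: i] ++ z ++ b); norm; move=> ->.
  by apply: eq_bigr => p _; norm.
move=> pv /mapP [p pL ->] /=.
case: (ABy p pL) => [lp | [y1 [l [y2 [Ep hl l1 l2]]]]].
- apply: (Rep_lin (M := [:: (q6 - 1, x ++ p.2 ++ [:: i] ++ z); (q6, x ++ p.2 ++ z)])).
    move=> t ht a b; rewrite big_cons big_cons big_nil addr0 /=.
    have lp' : all (fun l : 'I_m => ((val l).+1 < val i)%N) p.2 by rewrite hi.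
    have := move_right ht lp' (a ++ x) (i :: z ++ b); norm; move=> ->.
    have := (proj2 (proj2 ht)) (a ++ x ++ p.2) (z ++ b) i; norm; move=> ->.
    by [].
  move=> r; rewrite !inE => /orP [/eqP -> | /eqP ->] /=; apply: IHN;
    rewrite ?all_cat /= ?all_cat /= ?ax ?az ?hi ?leqnn ?(lowk'_le lp) //= ?(cnt_cat, cnt_cons) hx (lowk'_cnt lp) ?hi ?eqxx /= ?add0n ?add1n //.
  exact: ltnW.
- apply: (Rep_lin (M := [:: (1, x ++ y1 ++ [:: l; i; l] ++ y2 ++ z)])).
    move=> t ht a b; rewrite big_cons big_nil addr0 /= mul1r Ep.
    have l1' : all (fun l : 'I_m => ((val l).+1 < val i)%N) y1 by rewrite hi.
    have l2' : all (fun l : 'I_m => ((val l).+1 < val i)%N) y2 by rewrite hi.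
    have := move_right ht l1' (a ++ x) (l :: y2 ++ i :: z ++ b); norm; move=> ->.
    have := move_right ht l2' (a ++ x ++ y1 ++ [:: i; l]) (z ++ b); norm; move=> <-.
    have := (proj1 ht) (a ++ x ++ y1) (y2 ++ z ++ b) l i; norm.
    by move=> -> //; rewrite hi hl.
  move=> r; rewrite !inE => /eqP -> /=; apply: IHN.
    have hlk : (val l == k) = false by rewrite -hl; apply/negbTE; rewrite neq_ltn ltnSn.
    by rewrite !(cnt_cat, cnt_cons) hx (lowk'_cnt l1) (lowk'_cnt l2) hlk hi eqxx /= !add0n add1n.
  have hlk : (val l <= k)%N by rewrite -hl.
  by rewrite !all_cat /= ax (lowk'_le l1) hlk hi leqnn /= all_cat (lowk'_le l2) az.
Qed.

Lemma HY0 m : HYk m 0.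
Proof.
case=> [|l y] //= _; exists [:: (1, [::])]; split.
  by move=> t _ a b; rewrite big_cons big_nil mul1r addr0.
by move=> p; rewrite inE => /eqP -> /=; left.
Qed.

Lemma HYS m k : (forall w : seq 'I_m, all (fun l : 'I_m => (val l <= k)%N) w -> Rep k w) ->
  HYk m k.+1.
Proof.
move=> H y hy.
have [L [HL gL]] := H y hy.
exists L; split => // p pL.
have /andP [ap cp] := allP gL p pL.
case: (leqP (cnt k p.2) 0) => [c0|c1].
  left; have := all_le_lt ap; rewrite leqn0 in c0; move/(_ (eqP c0)).
  by apply: sub_all => l.
right.
have hs : has (fun l : 'I_m => val l == k) p.2 by rewrite has_count.
have [x [l [y2 [Ep hl hx]]]] := split_first hs.
have hy2 : cnt k y2 = 0%N.
  by move: cp; rewrite Ep cnt_cat cnt_cons hx hl eqxx /= add0n add1n ltnS leqn0 => /eqP.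
move: ap; rewrite Ep all_cat /= => /and3P [ax _ ay2].
exists x, l, y2; split => //; first by rewrite hl.
  by have := all_le_lt ax hx; apply: sub_all.
by have := all_le_lt ay2 hy2; apply: sub_all.
Qed.

Lemma red m k : forall w : seq 'I_m, all (fun l : 'I_m => (val l <= k)%N) w -> Rep k w.
Proof.
elim: k => [|k IH]; first exact: red_step (@HY0 m).
exact: red_step (HYS IH).
Qed.

Lemma markov_rel3 m eta (t : seq 'I_m -> algC) : is_markov_trace q6 eta t -> rel3 t.
Proof. by case=> [h1 [h2 [h3 _]]]; split => //; split. Qed.

Lemma solve_markov (A B D : algC) : (A - B) / (1 + q6) = D -> B = A - D * (1 + q6).
Proof. by move=> <-; rewrite divfK ?onePq_neq0 // opprB addrC subrK. Qed.

Lemma uniq_markov m (t1 t2 : seq 'I_m -> algC) :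
  is_markov_trace q6 (1 / 2) t1 -> is_markov_trace q6 (1 / 2) t2 -> forall w, t1 w = t2 w.
Proof.
move=> H1 H2.
suff H : forall K (w : seq 'I_m), all (fun l : 'I_m => (val l < K)%N) w -> t1 w = t2 w.
  by move=> w; apply: (H m); apply/allP => l _; exact: ltn_ord.
elim=> [|K IH] w.
  case: w => [|l w] //= _.
  by case: H1 => [_ [_ [_ [-> _]]]]; case: H2 => [_ [_ [_ [-> _]]]].
case: (ltnP K m) => [hK|hK] hw; last first.
  by apply: IH; apply/allP => l _; apply: leq_trans (ltn_ord l) hK.
have [L [HL gL]] := red hw.
have E1 := HL t1 (markov_rel3 H1) [::] [::]; have E2 := HL t2 (markov_rel3 H2) [::] [::].
rewrite /= !cats0 in E1 E2.
rewrite E1 E2; apply: eq_big_seq => p pL; rewrite !cats0; congr (_ * _).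
have /andP [ap cp] := allP gL p pL.
case: (leqP (cnt K p.2) 0) => [c0|c1].
  apply: IH; have := all_le_lt ap; apply; apply/eqP; by rewrite -leqn0.
have hs : has (fun l : 'I_m => val l == K) p.2 by rewrite has_count.
have [x [l [y [Ep hl hx]]]] := split_first hs.
have hy : cnt K y = 0%N.
  by move: cp; rewrite Ep cnt_cat cnt_cons hx hl eqxx /= add0n add1n ltnS leqn0 => /eqP.
move: ap; rewrite Ep all_cat /= => /and3P [ax _ ay].
have lz : all (fun l : 'I_m => (val l < K)%N) (y ++ x) by rewrite all_cat (all_le_lt ax hx) (all_le_lt ay hy).
have key : forall t : seq 'I_m -> algC, is_markov_trace q6 (1 / 2) t ->
    t (x ++ l :: y) = q6 * t (y ++ x) - 1 / 2 * t (y ++ x) * (1 + q6).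
  move=> t [_ [_ [_ [_ [Htr Hmk]]]]].
  have -> : x ++ l :: y = (x ++ [:: l]) ++ y by rewrite -catA.
  rewrite Htr catA cats1; apply: solve_markov; apply: Hmk.
  by rewrite hl.
by rewrite (key t1 H1) (key t2 H2) IH.
Qed.

Lemma genQ_supp m (k : nat) (b : Q m) : genQ (fun j : 'I_m => (val j < k)%N) b -> supp k b.
Proof.
elim=> [i hi|i hi||x y _ Hx _ Hy|a x _ Hx|x y _ Hx _ Hy].
- exact: supp_Qu.
- exact: supp_Qv.
- exact: supp_Q1.
- exact: supp_add.
- exact: supp_scale.
- exact: supp_mul.
Qed.

Unset Implicit Arguments.

Theorem mainTheorem4 (n : nat) (hn : (2 <= n)%N) :
  [/\ is_markov_trace q6 (1 / 2) (@TrPhi n.-1),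
      (forall t : seq 'I_n.-1 -> algC, is_markov_trace q6 (1 / 2) t ->
         forall w, t w = TrPhi w) &
      (forall i : 'I_n.-1, val i = n.-2 ->
         Tr (Qf i) = 1 / 2 /\
         (forall b : Q n.-1, genQ (fun j : 'I_n.-1 => (val j < n.-2)%N) b ->
            Tr (Qmul (Qf i) b) = Tr (Qf i) * Tr b))].
Proof.
split.
- exact: TrPhi_markov.
- move=> t ht w; apply: uniq_markov => //; exact: TrPhi_markov.
- move=> i hi; split; first exact: Tr_Qf.
  move=> b hb; apply: Tr_Qf_mul.
  have : (nat_of_ord i) = n.-2 := hi.
  by move=> ->; apply: genQ_supp.
Qed.
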